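(* Let $(G_i)_{i\in I}$ be a finite family of finite groups, $G=\prod_{i\in I}G_i$, $\pi_i\colon G\to G_i$ the projections, and $H\le G$ a subgroup. If $HM(G)=G$ and $\pi_i(H)=G_i$ for all $i\in I$, then $H=G$.
   Context: For a finite group $G$, $M(G)$ (the Melnikov subgroup) is the intersection of all maximal normal subgroups of $G$. *)

(* Defs.v *)
From HB Require Import structures.
From mathcomp Require Import all_boot all_order all_fingroup all_solvable.
Set Implicit Arguments. Unset Strict Implicit. Unset Printing Implicit Defensive.

(* We intersect with G so that
   M(1) = 1 (empty intersection convention inside G). *)
Definition Melnikov (gT : finGroupType) (G : {set gT}) : {set gT} :=
  G :&: \bigcap_(M : {group gT} | maxnormal M G G) M.

(* Main.v *)
Require Import Defs.
From HB Require Import structures.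
From mathcomp Require Import all_boot all_order all_fingroup all_solvable.

Set Implicit Arguments. Unset Strict Implicit. Unset Printing Implicit Defensive.
Open Scope group_scope.

Lemma maxnormal_pre (aT rT : finGroupType) (f : {morphism [set: aT] >-> rT})
  (N : {group rT}) :
  f @* [set: aT] = [set: rT] -> maxnormal N [set: rT] [set: rT] ->
  maxnormal (f @*^-1 N) [set: aT] [set: aT].
Proof.
move=> fT maxN; have [/andP[NT nNT] maxNP] := maxgroupP maxN.
apply/maxgroupP; split.
  rewrite properT; apply/andP; split.
    apply/eqP=> AT; have := congr1 (fun X => f @* X) AT.
    rewrite morphpreK ?fT ?subsetT // => NT'.
    by move: NT; rewrite properT NT' eqxx.
  have : f @*^-1 N <| f @*^-1 [set: rT].
    by rewrite morphpre_normal ?fT ?subsetT //= /normal subsetT.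
  by rewrite morphpreT => /normal_norm.
move=> K /andP[KT nKT] sAK.
have nsK : K <| [set: aT] by rewrite /normal subsetT.
have nY : f @* K <| [set: rT] by rewrite -fT morphim_normal.
have sNY : N \subset f @* K.
  by rewrite -(@morphpreK _ _ _ f N) ?fT ?subsetT // morphimS.
have KE : f @*^-1 (f @* K) = K.
  by apply: morphimGK; [apply: subset_trans (ker_sub_pre f N) sAK | apply: subsetT].
case: (eqVneq (f @* K) [set: rT]) => [YT|YnT].
  by move: KT; rewrite -KE YT morphpreT properT eqxx.
have YN := maxNP (f @* K)%G _ sNY.
apply/val_inj => /=; rewrite -KE.
suff -> : f @* K = N by [].
have := YN; rewrite properT YnT normal_norm //= => /(_ isT) -> //.
Qed.

Section Main.
Variables (I : finType) (gT : I -> finGroupType).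
Notation gTn := {dffun forall i : I, gT i}.
Variable H : {group gTn}.
Hypothesis hM : H * Melnikov [set: gTn] = [set: gTn].
Hypothesis hpi : forall i : I, @dffun_morphism I gT i @* H = [set: gT i].

Definition CS (S : {set I}) : {set gTn} := [set x : gTn | [forall j in S, x j == 1]].

Lemma CSP (S : {set I}) (x : gTn) : reflect (forall j, j \in S -> x j = 1) (x \in CS S).
Proof.
rewrite inE; apply: (iffP forall_inP) => h j jS; first by apply/eqP; apply: h.
by rewrite h.
Qed.

Lemma group_set_CS (S : {set I}) : group_set (CS S).
Proof.
apply/group_setP; split; first by apply/CSP => j _; rewrite ffunE.
move=> x y /CSP hx /CSP hy; apply/CSP => j jS.
by rewrite ffunE hx // hy // mulg1.
Qed.
Canonical CS_group (S : {set I}) := Group (group_set_CS S).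

Lemma CS_norm (S : {set I}) : [set: gTn] \subset 'N(CS S).
Proof.
apply/subsetP => y _; rewrite inE; apply/subsetP => x.
rewrite mem_conjg => /CSP hx; apply/CSP => j jS.
have := hx j jS; rewrite /conjg !ffunE invgK => e.
by apply/eqP; rewrite -(conjg_eq1 _ ((y j)^-1)) /conjg invgK; apply/eqP.
Qed.

Lemma CS_normal (S : {set I}) : CS S <| [set: gTn].
Proof. by rewrite /normal subsetT CS_norm. Qed.

Lemma step (S : {set I}) (i : I) : i \notin S -> H * CS S = [set: gTn] ->
  H * CS (i |: S) = [set: gTn].
Proof.
move=> iS hS.
set X := @dffun_morphism I gT i @* (H :&: CS S).
have fiE : forall x : gTn, @dffun_morphism I gT i x = x i by [].
have [XT|XnT] := eqVneq X [set: gT i].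
  apply/eqP; rewrite eqEsubset subsetT /=; apply/subsetP=> g _.
  have : g \in H * CS S by rewrite hS inE.
  case/mulsgP=> h c hH cC ->.
  have : c i \in X by rewrite XT inE.
  case/morphimP=> h' _ /setIP[h'H h'C]; rewrite fiE => ci.
  apply/mulsgP; exists (h * h') (h'^-1 * c); first by rewrite groupM.
  - apply/CSP => j; rewrite !ffunE => /setU1P[->|jS].
      by rewrite ci mulVg.
    by rewrite (CSP _ _ h'C j jS) (CSP _ _ cC j jS) invg1 mulg1.
  - by rewrite mulgA mulgK.
have nXT : X <| [set: gT i].
  rewrite -(hpi i); apply: morphim_normal.
  exact: (normalGI (subsetT H) (CS_normal S)).
pose gP := fun N : {group gT i} => (N \proper [set: gT i]) && ([set: gT i] \subset 'N(N)).
have [N maxN sXN] := @maxgroup_exists _ gP [group of X]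
  (introT andP (conj (etrans (properT _) XnT) (normal_norm nXT))).
have [/andP[NT nNT] maxNP] := maxgroupP maxN.
have fT : @dffun_morphism I gT i @* [set: gTn] = [set: gT i].
  by apply/eqP; rewrite eqEsubset subsetT -{1}(hpi i) morphimS // subsetT.
set A := (@dffun_morphism I gT i @*^-1 N)%G.
have memA : forall x, (x \in A) = (x i \in N) by move=> x; rewrite !inE.
have maxA : maxnormal A [set: gTn] [set: gTn] := maxnormal_pre fT maxN.
have nsA : A <| [set: gTn] := maxnormal_normal maxA.
set B := ((H :&: A) <*> CS S)%G.
have BE : (B : {set gTn}) = (H :&: A) * CS S.
  by apply: norm_joinEl; apply: subset_trans (subsetT _) (CS_norm S).
have [x _ xN] : exists2 x, x \in [set: gT i] & x \notin N by case/properP: NT.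
have maxB : maxnormal B [set: gTn] [set: gTn].
  apply/maxgroupP; split.
    apply/andP; split.
      rewrite properT; apply/eqP=> BT.
      have : x \in @dffun_morphism I gT i @* H by rewrite hpi inE.
      case/morphimP=> h _ hH; rewrite fiE => xE.
      have : h \in B by rewrite BT inE.
      rewrite BE; case/mulsgP=> h' c /setIP[h'H h'A] cC hE.
      have cH : c \in H by rewrite -(mulKg h' c) -hE groupM ?groupV.
      have ciN : c i \in N.
        apply: (subsetP sXN); apply/morphimP; exists c => //; by rewrite inE cH.
      move: xN; rewrite xE hE ffunE groupM //; by rewrite -memA.
    rewrite -hS mul_subG //.
      apply: normsY; last by apply: subset_trans (subsetT _) (CS_norm S).
      by apply: normsI (normG H) (subset_trans (subsetT H) (normal_norm nsA)).
    by apply: subset_trans (joing_subr _ _) (normG B).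
  move=> K /andP[KT nKT] sBK.
  have sCK : CS S \subset K by apply: subset_trans (joing_subr _ _) sBK.
  have sHAK : H :&: A \subset K by apply: subset_trans (joing_subl _ _) sBK.
  have nsK : K <| [set: gTn] by rewrite /normal subsetT.
  set Y := @dffun_morphism I gT i @* (H :&: K).
  have nsY : Y <| [set: gT i].
    by rewrite -(hpi i); apply: morphim_normal; apply: normalGI (subsetT H) nsK.
  have sNY : N \subset Y.
    apply/subsetP=> y yN.
    have : y \in @dffun_morphism I gT i @* H by rewrite hpi inE.
    case/morphimP=> h0 _ h0H yE; apply/morphimP; exists h0 => //.
    by rewrite inE h0H /= (subsetP sHAK) // inE h0H memA -fiE -yE.
  case: (eqVneq Y [set: gT i]) => [YT|YnT].
    exfalso; move: KT; rewrite properT; case/eqP.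
    apply/eqP; rewrite eqEsubset subsetT /=; apply/subsetP=> g _.
    have : g \in H * CS S by rewrite hS inE.
    case/mulsgP=> h c hH cC ->; rewrite groupM //; last exact: (subsetP sCK).
    have : h i \in Y by rewrite YT inE.
    case/morphimP=> k' _ /setIP[k'H k'K]; rewrite fiE => hk.
    have hkA : h * k'^-1 \in H :&: A.
      by rewrite inE groupM ?groupV //= memA ffunE hk ffunE mulgV group1.
    by rewrite -(mulgKV k' h) groupM // (subsetP sHAK).
  have gY : gP [group of Y] by rewrite /gP /= properT YnT normal_norm.
  have YN := maxNP _ gY sNY.
  suff KB : (K : {set gTn}) = B by exact: KB.
  apply/eqP; rewrite eqEsubset sBK andbT.
  apply/subsetP => k kK.
  have : k \in H * CS S by rewrite hS inE.
  case/mulsgP=> h c hH cC kE.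
  have hK : h \in K.
    by rewrite -(mulgK c h) -kE groupM // groupV (subsetP sCK).
  have hiN : h i \in N.
    have : h i \in Y by apply/morphimP; exists h => //; rewrite inE hH.
    by rewrite -[Y]/(gval [group of Y]) YN.
  by rewrite kE BE; apply/mulsgP; exists h c => //; rewrite inE hH memA.
exfalso.
have sMA : Melnikov [set: gTn] \subset A.
  by apply: subset_trans (subsetIr _ _) (bigcap_inf A maxA).
have sMB : Melnikov [set: gTn] \subset B.
  by apply: subset_trans (subsetIr _ _) (bigcap_inf B maxB).
have : dfung1 x \in H * Melnikov [set: gTn] by rewrite hM inE.
case/mulsgP=> h t hH tM gE.
have tA : t \in A := subsetP sMA t tM.
have : t \in B := subsetP sMB t tM.
rewrite BE; case/mulsgP=> h' c /setIP[h'H h'A] cC tE.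
have hhC : h * h' \in H :&: CS S.
  rewrite inE groupM //; apply/CSP => j jS.
  have ij : i != j by apply: contraNneq iS => ->.
  have := congr1 (fun z : gTn => z j) gE; rewrite /= dfung1_dflt // tE !ffunE.
  by rewrite (CSP _ _ cC j jS) mulg1 => <-.
have hhN : (h * h') i \in N.
  by apply: (subsetP sXN); apply/morphimP; exists (h * h').
have := congr1 (fun z : gTn => z i) gE; rewrite /= dfung1_id ffunE => xE.
move: xN; rewrite xE groupM //; last by rewrite -memA.
move: hhN; rewrite ffunE => hhN.
by rewrite -(mulgK (h' i) (h i)) groupM ?groupV // -memA.
Qed.

Lemma allS (S : {set I}) : H * CS S = [set: gTn].
Proof.
move: {2}#|S| (leqnn #|S|) => n; elim: n S => [|n IH] S.
  rewrite leqn0 cards_eq0 => /eqP ->.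
  have -> : CS set0 = [set: gTn].
    by apply/setP => x; rewrite in_setT; apply/CSP => j; rewrite inE.
  by rewrite -[setT]/(gval [set: gTn]%G) mulSGid ?subsetT.
case: (eqVneq S set0) => [->|/set0Pn[i iS]].
  move=> _; apply: IH; by rewrite cards0.
move=> le; rewrite -(setD1K iS); apply: step; first by rewrite !inE eqxx.
apply: IH; rewrite -ltnS (leq_trans _ le) //.
by rewrite (cardsD1 i S) iS.
Qed.

End Main.

(* G = prod_i G_i is the external direct product {dffun forall i, gT i};
   pi_i is [@dffun_morphism I gT i] (evaluation at i). *)
Theorem mainTheorem14 (I : finType) (gT : I -> finGroupType)
    (H : {group {dffun forall i : I, gT i}}) :
  (H * Melnikov [set: {dffun forall i : I, gT i}])%g
    = [set: {dffun forall i : I, gT i}] ->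
  (forall i : I, (@dffun_morphism I gT i @* H)%g = [set: gT i]) ->
  (H : {set _}) = [set: {dffun forall i : I, gT i}].
Proof.
move=> hM hpi; have := allS hM hpi [set: I].
have -> : CS gT [set: I] = 1.
  apply/setP => x; apply/idP/idP => [/CSP h|/set1P ->].
    by apply/set1P/ffunP => j; rewrite h ?inE // ffunE.
  by apply/CSP => j _; rewrite ffunE.
by rewrite mulg1.
Qed.
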